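(* Let $\varepsilon>0$, $\beta>0$ and let $\alpha$ be a sufficiently large constant. Let $d$ be large, and let $\mathcal{G}$ be a graph on $\alpha d$ vertices with $\Delta(\mathcal{G})\le\beta\delta(\mathcal{G})$ and $\delta(\mathcal{G})>d^{\varepsilon}$; set $p^-=\delta(\mathcal{G})/(\alpha d)$. Let $G$ be a bipartite graph with stable sets $X$ and $Y$ and maximum degree $d$. Let $\chi$ be a random coloring of $Y$ in which each vertex independently receives a color chosen uniformly at random from $V(\mathcal{G})$. For $x\in X$ and $c\in V(\mathcal{G})$ let $W_{x,c}$ be the number of $y\in N_G(x)$ such that (1) $y$ is the only vertex of color $\chi(y)$ in $N_G(x)$; (2) $\mathbf{Bad}(y,\chi,G)\leq d/\sqrt{\alpha}$; and (3) $c\,\chi(y)\in E(\mathcal{G})$. If $x\in X$ satisfies $d\leq 2d_G(x)$, then for every $c\in V(\mathcal{G})$, $$\Pr\left(W_{x,c}\leq \frac{p^- d_G(x)}{2}\right)=e^{-\Omega(\delta(\mathcal{G}))}.$$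
   Context: For a graph $G$, a partial vertex coloring $\chi$ of $G$ and a colored vertex $v$, $\mathbf{Bad}(v,\chi,G)$ is the number of vertices $u\in N_G(v)$ for which there exists $v'\in N_G(u)$ with $v'\neq v$ and $\chi(v')=\chi(v)$ (i.e. the color of $v$ appears more than once in $N_G(u)$). $N_G(v)$ is the neighbourhood and $d_G(v)$ the degree of $v$ in $G$. Asymptotic notation is as $d\to\infty$ with $\alpha,\beta,\varepsilon$ fixed. *)

(* Defs.v *)
From mathcomp Require Import all_boot.
From Stdlib Require Import Reals.

Set Implicit Arguments.
Unset Strict Implicit.
Unset Printing Implicit Defensive.

Definition Rleb (a b : R) : bool := if Rle_dec a b then true else false.

Section Graphs.
Variable T : finType.
Definition simple_graph (g : rel T) := symmetric g /\ irreflexive g.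

Definition nbhd (g : rel T) (v : T) : {set T} := [set u | g v u].
Definition deg (g : rel T) (v : T) : nat := #|nbhd g v|.

(* minimum / maximum degree (the graph has at least one vertex when used) *)
Definition mindeg (g : rel T) : nat := \big[minn/#|T|]_(v : T) deg g v.
Definition maxdeg (g : rel T) : nat := \max_(v : T) deg g v.

Definition bipartition (g : rel T) (X Y : {set T}) : Prop :=
  [disjoint X & Y] /\ X :|: Y = setT /\
  (forall u v, u \in X -> v \in X -> ~~ g u v) /\
  (forall u v, u \in Y -> v \in Y -> ~~ g u v).

Variable C : finType.

(* partial colorings: chi v = None means v is uncolored *)
Definition Bad (g : rel T) (chi : {ffun T -> option C}) (v : T) : nat :=
  #|[set u in nbhd g v |
      [exists v', [&& v' \in nbhd g u, v' != v, chi v' != None &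
                      chi v' == chi v]]]|.

Definition colorings_of (Y : {set T}) : {set {ffun T -> option C}} :=
  [set chi : {ffun T -> option C} | [forall v, (chi v != None) == (v \in Y)]].

Definition W (eG : rel C) (g : rel T) (alpha : R) (d : nat)
    (chi : {ffun T -> option C}) (x : T) (c : C) : nat :=
  #|[set y in nbhd g x |
      match chi y with
      | Some col =>
          [&& [forall y', (y' \in nbhd g x) ==> (chi y' == Some col) ==> (y' == y)],
              Rleb (INR (Bad g chi y)) (INR d / sqrt alpha) &
              eG c col]
      | None => false
      end]|.

Definition uprob (S : finType) (Om : {set S}) (P : pred S) : R :=
  (INR #|[set s in Om | P s]| / INR #|Om|)%R.
End Graphs.

(* Main.v *)
Require Import Defs.
From HB Require Import structures.
From mathcomp Require Import all_boot.
From Stdlib Require Import Reals.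
From Stdlib Require Import Lra Lia.
Set Implicit Arguments. Unset Strict Implicit. Unset Printing Implicit Defensive.

Lemma RplusA : associative Rplus. Proof. move=> x y z; ring. Qed.
Lemma RmultA : associative Rmult. Proof. move=> x y z; ring. Qed.
Lemma Rmult_0_l' : left_zero R0 Rmult. Proof. move=> x; ring. Qed.
Lemma Rmult_0_r' : right_zero R0 Rmult. Proof. move=> x; ring. Qed.
HB.instance Definition _ := Monoid.isComLaw.Build R R0 Rplus RplusA Rplus_comm Rplus_0_l.
HB.instance Definition _ := Monoid.isComLaw.Build R R1 Rmult RmultA Rmult_comm Rmult_1_l.
HB.instance Definition _ := Monoid.isMulLaw.Build R R0 Rmult Rmult_0_l' Rmult_0_r'.
HB.instance Definition _ := Monoid.isAddLaw.Build R Rmult Rplus Rmult_plus_distr_r Rmult_plus_distr_l.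

Section RBig.
Variable I : Type.
Lemma Rsum_le (r : seq I) (P : pred I) (F G : I -> R) :
  (forall i, P i -> (F i <= G i)%R) ->
  (\big[Rplus/R0]_(i <- r | P i) F i <= \big[Rplus/R0]_(i <- r | P i) G i)%R.
Proof. move=> H; elim/big_ind2: _; [lra | intros; lra | auto]. Qed.
Lemma Rsum_ge0 (r : seq I) (P : pred I) (F : I -> R) :
  (forall i, P i -> (0 <= F i)%R) -> (0 <= \big[Rplus/R0]_(i <- r | P i) F i)%R.
Proof. move=> H; elim/big_ind: _; [lra | intros; lra | auto]. Qed.
Lemma Rprod_ge0 (r : seq I) (P : pred I) (F : I -> R) :
  (forall i, P i -> (0 <= F i)%R) -> (0 <= \big[Rmult/R1]_(i <- r | P i) F i)%R.
Proof. move=> H; elim/big_ind: _; [lra | intros; exact: Rmult_le_pos | auto]. Qed.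
Lemma Rprod_exp (r : seq I) (P : pred I) (F : I -> R) :
  \big[Rmult/R1]_(i <- r | P i) exp (F i) = exp (\big[Rplus/R0]_(i <- r | P i) F i).
Proof.
elim/big_rec2: _ => [|i x y _ ->]; first by rewrite exp_0.
by rewrite exp_plus.
Qed.
Lemma INR_sum (r : seq I) (P : pred I) (F : I -> nat) :
  INR (\sum_(i <- r | P i) F i) = \big[Rplus/R0]_(i <- r | P i) INR (F i).
Proof. elim/big_rec2: _ => [|i x y _ H] //; by rewrite plus_INR H. Qed.
End RBig.

Lemma Rsum_card (I : finType) (P : pred I) (a : R) :
  \big[Rplus/R0]_(i | P i) a = (INR #|P| * a)%R.
Proof.
rewrite -sum1_card INR_sum big_distrl /=. apply: eq_bigr => i _ /=; ring.
Qed.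

Definition fupd (I C : finType) (f : {ffun I -> C}) (i : I) (c : C) : {ffun I -> C} :=
  [ffun j => if j == i then c else f j].
Definition agree (I C : finType) (J : {set I}) (f f0 : {ffun I -> C}) :=
  [forall j, (j \notin J) ==> (f j == f0 j)].

Section GL.
Variables (I C : finType) (r : I -> nat) (rinj : injective r).
Variable G : I -> {ffun I -> C} -> R.
Hypothesis G0 : forall i f, (0 <= G i f)%R.
Hypothesis Gdep : forall i (f f' : {ffun I -> C}), (forall j, (r j <= r i)%N -> f j = f' j) -> G i f = G i f'.
Hypothesis Gavg : forall i f, (\big[Rplus/R0]_(c : C) G i (fupd f i c) <= INR #|C|)%R.

Lemma GL_claim n : forall J : {set I}, #|J| = n -> forall f0,
  (\big[Rplus/R0]_(f | agree J f f0) \big[Rmult/R1]_(i in J) G i f <= INR #|C| ^ n)%R.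
Proof.
elim: n => [|n IH] J HJ f0.
  have J0 : J = set0 by apply/eqP; rewrite -cards_eq0 HJ.
  rewrite (eq_bigl (pred1 f0)); last first.
    move=> f; rewrite /agree J0 /=; apply/forallP/eqP => [H|->]; last by move=> j; rewrite eqxx implybT.
    by apply/ffunP => j; move: (H j); rewrite in_set0 /= => /eqP.
  rewrite big_pred1_eq J0 big_set0 /=; lra.
have : (0 < #|J|)%N by rewrite HJ.
case/card_gt0P => i0 Hi0.
case: (arg_maxnP r Hi0) => [im Hs Hmax].
have {}Hs : im \in J := Hs.
have {}Hmax : forall j, j \in J -> (r j <= r im)%N := Hmax.
set J' := J :\ im.
have HJ' : #|J'| = n by move: HJ; rewrite (cardsD1 im J) Hs /= => [[]].
have Hrl : forall i, i \in J' -> (r i < r im)%N.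
  move=> i; rewrite in_setD1 => /andP [Hne HiJ].
  rewrite ltn_neqAle Hmax // andbT; apply/eqP => /rinj E; by rewrite E eqxx in Hne.
set F := fun f => \big[Rmult/R1]_(i in J) G i f.
rewrite (reindex_onto (fun p : {ffun I -> C} * C => fupd p.1 im p.2)
                      (fun f => (fupd f im (f0 im), f im))); last first.
  move=> f _; apply/ffunP => j; rewrite !ffunE /=; by case: (j =P im) => [->|].
rewrite (eq_bigl (fun p => agree J' p.1 f0 && true)); last first.
  case=> f' c /=; apply/idP/idP.
  - case/andP=> /forallP Ha /eqP [E1 _]; apply/andP; split => //.
    apply/forallP => j; apply/implyP => Hj.
    case: (j =P im) => [->|/eqP Hne].
      by rewrite -E1 ffunE eqxx.
    move: (Ha j); rewrite ffunE (negbTE Hne) /= => /implyP; apply.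
    by move: Hj; rewrite in_setD1 Hne.
  - case/andP=> /forallP Ha _; apply/andP; split.
      apply/forallP => j; apply/implyP => Hj.
      have Hne : j != im by apply/eqP => E; move: Hj; rewrite E Hs.
      rewrite ffunE (negbTE Hne); apply: (implyP (Ha j)); by rewrite in_setD1 Hne.
    rewrite xpair_eqE; apply/andP; split; last by rewrite ffunE eqxx.
    apply/eqP/ffunP => j; rewrite !ffunE.
    case: (j =P im) => [->|] //.
    by move: (Ha im); rewrite in_setD1 eqxx /= => /eqP.
rewrite -(pair_big_dep (fun f' => agree J' f' f0) (fun _ _ => true)
            (fun f' c => F (fupd f' im c))) /=.
apply: (Rle_trans _ (\big[Rplus/R0]_(f' | agree J' f' f0)
                       (INR #|C| * \big[Rmult/R1]_(i in J') G i f'))%R).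
  apply: Rsum_le => f' _.
  rewrite /F.
  have E : forall c, \big[Rmult/R1]_(i in J) G i (fupd f' im c)
             = (G im (fupd f' im c) * \big[Rmult/R1]_(i in J') G i f')%R.
    move=> c; rewrite (bigD1 im) //=; congr Rmult.
    apply: eq_big => [i|i Hi]; first by rewrite in_setD1 andbC.
    apply: Gdep => j Hj; rewrite ffunE.
    case: (j =P im) => [E|] //.
    have : (r i < r im)%N by apply: Hrl; rewrite in_setD1 andbC.
    by rewrite -E ltnNge Hj.
  rewrite (eq_bigr _ (fun c _ => E c)) -big_distrl /=.
  apply: Rmult_le_compat_r; [by apply: Rprod_ge0 => *; apply: G0 | exact: Gavg].
rewrite -big_distrr /=; change (INR #|C| ^ n.+1)%R with (INR #|C| * INR #|C| ^ n)%R; apply: Rmult_le_compat_l; [exact: pos_INR | exact: IH].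
Qed.

Lemma GL (c0 : C) :
  (\big[Rplus/R0]_(f : {ffun I -> C}) \big[Rmult/R1]_(i : I) G i f <= INR #|C| ^ #|I|)%R.
Proof.
have := GL_claim (J := setT) (cardsT I) [ffun => c0].
rewrite (eq_bigl predT); last by move=> f; apply/forallP => j; rewrite in_setT.
by rewrite (eq_bigr (fun f => \big[Rmult/R1]_(i : I) G i f)) // => f _; apply: eq_bigl => i; rewrite in_setT.
Qed.
End GL.

Lemma exp_le x y : (x <= y)%R -> (exp x <= exp y)%R.
Proof. case/Rle_lt_or_eq_dec => [H|->]; [left; exact: exp_increasing | lra]. Qed.

Lemma Rsum_ind (I : finType) (P : pred I) :
  \big[Rplus/R0]_(i : I) (if P i then R1 else R0) = INR #|[set i | P i]|.
Proof.
rewrite -big_mkcond Rsum_card /=; rewrite Rmult_1_r; congr INR.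
by apply: eq_card => i; rewrite inE.
Qed.

Section Markov.
Variables (I C : finType) (r : I -> nat) (rinj : injective r).
Variable G : I -> {ffun I -> C} -> R.
Hypothesis G0 : forall i f, (0 <= G i f)%R.
Hypothesis Gdep : forall i (f f' : {ffun I -> C}), (forall j, (r j <= r i)%N -> f j = f' j) -> G i f = G i f'.
Hypothesis Gavg : forall i f, (\big[Rplus/R0]_(c : C) G i (fupd f i c) <= INR #|C|)%R.
Variable c0 : C.

Lemma markov (E : pred {ffun I -> C}) (M : R) : (0 <= M)%R ->
  (forall f, E f -> M <= \big[Rmult/R1]_(i : I) G i f)%R ->
  (INR #|[set f | E f]| * M <= INR #|C| ^ #|I|)%R.
Proof.
move=> M0 HM; apply: Rle_trans (GL rinj G0 Gdep Gavg c0).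
rewrite (bigID E) /=.
apply: Rle_trans (_ : _ <= \big[Rplus/R0]_(i | E i) \big[Rmult/R1]_(i0 : I) G i0 i + 0)%R _.
  rewrite Rplus_0_r.
  have -> : #|[set f | E f]| = #|E| by apply: eq_card => f; rewrite inE.
  rewrite -Rsum_card; exact: Rsum_le.
apply: Rplus_le_compat_l; apply: Rsum_ge0 => f _; apply: Rprod_ge0 => *; apply: G0.
Qed.
End Markov.

Section ExpTemplate.
Variables (I C : finType) (r : I -> nat) (rinj : injective r) (c0 : C).
Variables (P : I -> {ffun I -> C} -> bool) (h : I -> {ffun I -> C} -> R) (th : R).
Hypothesis Pdep : forall i (f f' : {ffun I -> C}), (forall j, (r j <= r i)%N -> f j = f' j) -> P i f = P i f'.
Hypothesis hdep : forall i (f f' : {ffun I -> C}), (forall j, (r j < r i)%N -> f j = f' j) -> h i f = h i f'.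
Hypothesis Havg : forall i f,
  ((INR #|C| + (exp th - 1) * INR #|[set c | P i (fupd f i c)]|) * exp (- h i f) <= INR #|C|)%R.

Lemma exp_template (E : pred {ffun I -> C}) (M : R) :
  (forall f, E f -> M <= th * INR #|[set i | P i f]| - \big[Rplus/R0]_(i : I) h i f)%R ->
  (INR #|[set f | E f]| * exp M <= INR #|C| ^ #|I|)%R.
Proof.
move=> HM.
pose G i f := exp (th * (if P i f then R1 else R0) - h i f).
apply: (@markov I C r rinj G) => //.
- by move=> i f; left; apply: exp_pos.
- move=> i f f' H; rewrite /G (Pdep H) (hdep (f' := f')) // => j Hj; apply: H; exact: ltnW.
- move=> i f.
  have E1 : forall c, G i (fupd f i c) = ((1 + (exp th - 1) * (if P i (fupd f i c) then R1 else R0)) * exp (- h i f))%R.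
    move=> c; rewrite /G (@hdep i (fupd f i c) f); last first.
      move=> j Hj; rewrite ffunE; case: (j =P i) => [Ej|] //; by rewrite Ej ltnn in Hj.
    rewrite Rminus_def exp_plus; congr Rmult; case: (P i _); rewrite ?Rmult_1_r ?Rmult_0_r ?exp_0; ring.
  rewrite (eq_bigr _ (fun c _ => E1 c)) -big_distrl /= big_split /= -big_distrr /= Rsum_ind.
  rewrite (Rsum_card predT) Rmult_1_r cardE /= -cardE.
  have -> : #|predT : pred C| = #|C| by apply: eq_card.
  exact: Havg.
- by left; apply: exp_pos.
- move=> f Ef; rewrite Rprod_exp; apply: exp_le.
  rewrite big_split /= -big_distrr /= Rsum_ind.
  have := HM f Ef.
  have -> : \big[Rplus/R0]_(i : I) (- h i f)%R = (- \big[Rplus/R0]_(i : I) h i f)%R.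
    elim/big_rec2: _ => [|i x y _ ->]; ring.
  lra.
Qed.
End ExpTemplate.

Lemma one_plus_exp x : ((1 + x) * exp (- x) <= 1)%R.
Proof.
have H := exp_ineq1_le x; have Hp := exp_pos (- x).
have E : (exp x * exp (- x) = 1)%R by rewrite -exp_plus Rplus_opp_r exp_0.
nra.
Qed.

Lemma exp_half_le y : (0 <= y <= 1)%R -> (exp (y / 2) <= 1 + y)%R.
Proof.
move=> Hy.
have H := exp_ineq1_le (- (y / 2)).
have E : (exp (y / 2) * exp (- (y / 2)) = 1)%R by rewrite -exp_plus Rplus_opp_r exp_0.
have Hp := exp_pos (y / 2).
nra.
Qed.

Lemma Rprod_le (I : Type) (r : seq I) (P : pred I) (F G : I -> R) :
  (forall i, P i -> 0 <= F i <= G i)%R ->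
  (\big[Rmult/R1]_(i <- r | P i) F i <= \big[Rmult/R1]_(i <- r | P i) G i)%R.
Proof.
move=> H.
suff : (0 <= \big[Rmult/R1]_(i <- r | P i) F i <= \big[Rmult/R1]_(i <- r | P i) G i)%R by case.
elim/big_ind2: _; [lra | | auto].
move=> x1 x2 y1 y2 [H1 H2] [H3 H4]; split; [exact: Rmult_le_pos | ].
apply: Rmult_le_compat; lra.
Qed.

Section WTemplate.
Variables (I C : finType) (r : I -> nat) (rinj : injective r) (c0 : C).
Variables (P : I -> {ffun I -> C} -> bool) (w : I -> R) (q : R).
Hypothesis Pdep : forall i (f f' : {ffun I -> C}), (forall j, (r j <= r i)%N -> f j = f' j) -> P i f = P i f'.
Hypothesis w01 : forall i, (0 <= w i <= 1)%R.
Hypothesis Hq : forall i f, (INR #|[set c | P i (fupd f i c)]| <= q * INR #|C|)%R.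

Lemma w_template (E : pred {ffun I -> C}) (M : R) :
  (forall f, E f -> M <= / 2 * \big[Rplus/R0]_(i : I) (w i * (if P i f then R1 else R0))
                       - q * \big[Rplus/R0]_(i : I) w i)%R ->
  (INR #|[set f | E f]| * exp M <= INR #|C| ^ #|I|)%R.
Proof.
move=> HM.
pose G i f := ((1 + w i * (if P i f then R1 else R0)) * exp (- (w i * q)))%R.
have Gp : forall i f, (0 <= G i f)%R.
  move=> i f; apply: Rmult_le_pos; last by left; apply: exp_pos.
  have := w01 i; case: (P i f); lra.
apply: (@markov I C r rinj G) => //.
- move=> i f f' H; by rewrite /G (Pdep H).
- move=> i f.
  rewrite /G -big_distrl /= big_split /= -big_distrr /= Rsum_ind (Rsum_card predT) Rmult_1_r.
  have -> : #|predT : pred C| = #|C| by apply: eq_card.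
  have Hw := w01 i; have Hqi := Hq i f.
  have HN := pos_INR #|C|.
  have H1 := one_plus_exp (w i * q).
  have Hp := exp_pos (- (w i * q)).
  have : (INR #|C| + w i * INR #|[set c | P i (fupd f i c)]| <= INR #|C| * (1 + w i * q))%R.
    have : (w i * INR #|[set c | P i (fupd f i c)]| <= w i * (q * INR #|C|))%R.
      by apply: Rmult_le_compat_l; lra.
    nra.
  nra.
- by left; apply: exp_pos.
- move=> f Ef.
  apply: Rle_trans (_ : _ <= \big[Rmult/R1]_(i : I) (exp (w i * (if P i f then R1 else R0) / 2) * exp (- (w i * q))))%R _.
    rewrite big_split /= !Rprod_exp -exp_plus; apply: exp_le.
    have := HM f Ef.
    have -> : \big[Rplus/R0]_(i : I) (w i * (if P i f then R1 else R0) / 2)%R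
      = (/ 2 * \big[Rplus/R0]_(i : I) (w i * (if P i f then R1 else R0)))%R.
      rewrite big_distrr /=; apply: eq_bigr => i _; rewrite /Rdiv; ring.
    have -> : \big[Rplus/R0]_(i : I) (- (w i * q))%R = (- (q * \big[Rplus/R0]_(i : I) w i))%R.
      elim/big_rec2: _ => [|i x y _ ->]; ring.
    lra.
  apply: Rprod_le => i _; split.
    apply: Rmult_le_pos; left; apply: exp_pos.
  apply: Rmult_le_compat_r; first by left; apply: exp_pos.
  apply: exp_half_le; have := w01 i; case: (P i f); lra.
Qed.
End WTemplate.

Section Ext.
Variables (T C : finType) (Y : {set T}).
Local Notation I := {x : T | x \in Y}.

Definition ext (f : {ffun I -> C}) : {ffun T -> option C} :=
  [ffun v => if insub v is Some y then Some (f y) else None].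

Lemma ext_val f (i : I) : ext f (val i) = Some (f i).
Proof. by rewrite ffunE valK. Qed.

Lemma ext_out f v : v \notin Y -> ext f v = None.
Proof. by move=> Hv; rewrite ffunE insubN. Qed.

Lemma ext_None f v : (ext f v == None) = (v \notin Y).
Proof.
case: (boolP (v \in Y)) => Hv /=; last by rewrite ext_out.
by rewrite -[v]/(val (Sub v Hv : I)) ext_val.
Qed.

Lemma ext_agree (f f' : {ffun I -> C}) v : (forall j : I, val j = v -> f j = f' j) -> ext f v = ext f' v.
Proof.
move=> H; rewrite !ffunE; case: insubP => // j _ Ej; by rewrite H.
Qed.

Lemma ext_fupd (f : {ffun I -> C}) i c v : v != val i -> ext (fupd f i c) v = ext f v.
Proof.
move=> Hv; apply: ext_agree => j Ej; rewrite ffunE; case: (j =P i) => // Eji.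
by move: Hv; rewrite -Ej Eji eqxx.
Qed.

Lemma ext_fupd_val (f : {ffun I -> C}) i c : ext (fupd f i c) (val i) = Some c.
Proof. by rewrite ext_val ffunE eqxx. Qed.

Lemma ext_inj : injective ext.
Proof.
move=> f f' E; apply/ffunP => i; move: (congr1 (fun h : {ffun T -> option C} => h (val i)) E).
by rewrite !ext_val => [[]].
Qed.

Lemma ext_col f : ext f \in colorings_of C Y.
Proof. rewrite inE; apply/forallP => v; by rewrite ext_None negbK. Qed.

Lemma card_transfer (c0 : C) (P : pred {ffun T -> option C}) :
  #|[set chi in colorings_of C Y | P chi]| = #|[set f : {ffun I -> C} | P (ext f)]|.
Proof.
rewrite -(card_imset _ ext_inj); apply: eq_card => chi.
apply/idP/idP.
  rewrite inE => /andP [Hc Hp].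
  have E : chi = ext [ffun y : I => odflt c0 (chi (val y))].
    apply/ffunP => v; rewrite ffunE.
    move: Hc; rewrite inE => /forallP /(_ v) /eqP Hv.
    case: insubP => [j Hj Ej|Hj].
      rewrite ffunE Ej.
      by case: (chi v) Hv => //= /negP; rewrite Hj.
    by apply/eqP; rewrite -[_ == _]negbK Hv.
  rewrite E; apply: imset_f; by rewrite inE -E.
case/imsetP => f; rewrite inE => Hf ->; by rewrite inE ext_col.
Qed.

Lemma card_cols (c0 : C) : #|colorings_of C Y| = expn #|C| #|{: I}|.
Proof.
have := card_transfer c0 predT.
rewrite (_ : [set chi in _ | predT chi] = colorings_of C Y); last by apply/setP => v; rewrite inE andbT.
move->; rewrite (_ : [set f | _] = setT); last by apply/setP => f; rewrite !inE.
by rewrite cardsT card_ffun.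
Qed.

Lemma card_sub (Q : pred T) : #|[set i : I | Q (val i)]| = #|[set a in Y | Q a]|.
Proof.
rewrite -!sum1_card.
rewrite [RHS](eq_bigl (fun a => (a \in Y) && Q a)); last by move=> a; rewrite inE.
rewrite (big_sub_cond Y Q); apply: eq_bigl => i; by rewrite inE.
Qed.

Lemma INR_expn a b : INR (expn a b) = (INR a ^ b)%R.
Proof. elim: b => [|b IH]; first by rewrite expn0. by rewrite expnS mult_INR IH. Qed.

Lemma uprob_bound (c0 : C) (P : pred {ffun T -> option C}) (M : R) :
  (INR #|[set f : {ffun I -> C} | P (ext f)]| * exp M <= INR #|C| ^ #|{: I}|)%R ->
  (uprob (colorings_of C Y) P <= exp (- M))%R.
Proof.
move=> H.
rewrite /uprob (card_transfer c0) (card_cols c0) INR_expn.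
have Hpos : (0 < INR #|C| ^ #|{: I}|)%R.
  apply: pow_lt; apply: lt_0_INR; apply/ltP; by apply/card_gt0P; exists c0.
have E : (exp M * exp (- M) = 1)%R by rewrite -exp_plus Rplus_opp_r exp_0.
have := exp_pos M; have := exp_pos (-M).
move=> Hp1 Hp2.
set a := INR _ in H *; set b := (INR #|C| ^ _)%R in H Hpos *.
have Hinv : (0 < / b)%R by apply: Rinv_0_lt_compat.
have Ha : (a <= b * exp (- M))%R by nra.
have : (a * / b <= b * exp (- M) * / b)%R by apply: Rmult_le_compat_r; lra.
replace (b * exp (- M) * / b)%R with (exp (- M)) by (field; lra).
done.
Qed.
End Ext.

Lemma Rsum_indc (I : finType) (P : pred I) (a : R) :
  \big[Rplus/R0]_(i : I) (a * (if P i then R1 else R0))%R = (a * INR #|[set i | P i]|)%R.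
Proof. by rewrite -big_distrr /= Rsum_ind. Qed.

Section Concrete.
Variables (T C : finType) (g : rel T) (Y Y0 : {set T}) (S : {set C}) (c0 : C).
Hypothesis Y0Y : Y0 \subset Y.
Local Notation I := {x : T | x \in Y}.
Local Notation N := (INR #|C|).
Local Notation m := #|Y0|.

Definition inS (o : option C) := if o is Some c then c \in S else false.
Definition Aset (chi : {ffun T -> option C}) := [set a in Y0 | inS (chi a)].

Definition rT (i : I) : nat := enum_rank (val i).
Lemma rT_inj : injective rT.
Proof. move=> i j E; apply: val_inj; apply: enum_rank_inj; exact: ord_inj. Qed.

Lemma card_Y0 : #|[set i : I | val i \in Y0]| = m.
Proof.
rewrite (card_sub Y (fun a => a \in Y0)); apply: eq_card => a; rewrite inE andbC.
apply/andP/idP => [[]|H] //; split => //; exact: (subsetP Y0Y).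
Qed.

Lemma card_Aset (f : {ffun I -> C}) :
  #|[set i : I | (val i \in Y0) && inS (ext f (val i))]| = #|Aset (ext f)|.
Proof.
rewrite (card_sub Y (fun a => (a \in Y0) && inS (ext f a))); apply: eq_card => a; rewrite !inE andbC -andbA.
apply/andP/andP => [[H1 /andP [H2 H3]]|[H1 H2]] //; split => //; apply/andP; split => //; exact: (subsetP Y0Y).
Qed.

Lemma const_event (th k : R) (E : pred {ffun T -> option C}) (M : R) :
  ((N + (exp th - 1) * INR #|S|) * exp (- k) <= N)%R ->
  (forall f : {ffun I -> C}, E (ext f) -> M <= th * INR #|Aset (ext f)| - k * INR m)%R ->
  (uprob (colorings_of C Y) E <= exp (- M))%R.
Proof.
move=> Hk HE; apply: (uprob_bound c0).
apply: (@exp_template I C rT rT_inj c0 (fun i f => (val i \in Y0) && inS (ext f (val i)))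
           (fun i f => k * (if val i \in Y0 then R1 else R0))%R th).
- move=> i f f' H; congr andb; congr inS; apply: ext_agree => j Ej; apply: H; by rewrite /rT Ej.
- by [].
- move=> i f.
  case: (boolP (val i \in Y0)) => Hi /=.
    have -> : #|[set c | inS (ext (fupd f i c) (val i))]| = #|S|.
      by apply: eq_card => c; rewrite inE ext_fupd_val.
    by rewrite Rmult_1_r.
  rewrite (_ : [set c | false] = set0); last by apply/setP => c; rewrite inE.
  rewrite cards0; replace (k * R0)%R with R0 by ring; rewrite Ropp_0 exp_0 /=; lra.
- move=> f Ef; rewrite Rsum_indc card_Aset card_Y0; exact: HE.
Qed.

Definition R1set (rho : T -> nat) (chi : {ffun T -> option C}) :=
  [set a in Y0 | inS (chi a) && [exists b, [&& b \in Y0, (rho b < rho a)%N & chi b == chi a]]].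
Definition Hset (rho : T -> nat) (chi : {ffun T -> option C}) (a : T) :=
  [set b in Y0 | (rho b < rho a)%N && inS (chi b)].

Lemma R1_event (rho : T -> nat) (rinj : injective rho) (E : pred {ffun T -> option C}) (M : R) :
  (0 < N)%R ->
  (forall f : {ffun I -> C}, E (ext f) ->
     M <= ln 2 * INR #|R1set rho (ext f)| - INR m * INR #|Aset (ext f)| / N)%R ->
  (uprob (colorings_of C Y) E <= exp (- M))%R.
Proof.
move=> HN HE; apply: (uprob_bound c0).
have rinj' : injective (fun i : I => rho (val i)) by move=> i j /rinj /val_inj.
have agr : forall (f f' : {ffun I -> C}) (i : I),
    (forall j : I, (rho (val j) <= rho (val i))%N -> f j = f' j) ->
    forall b, (rho b <= rho (val i))%N -> ext f b = ext f' b.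
  by move=> f f' i H b Hb; apply: ext_agree => j Ej; apply: H; rewrite Ej.
apply: (@exp_template I C (fun i => rho (val i)) rinj' c0
   (fun i f => (val i \in Y0) && (inS (ext f (val i)) &&
        [exists b, [&& b \in Y0, (rho b < rho (val i))%N & ext f b == ext f (val i)]]))
   (fun i f => if val i \in Y0 then INR #|Hset rho (ext f) (val i)| / N else R0)%R (ln 2)).
- move=> i f f' H; rewrite (agr f f' i H (val i)) //; congr andb; congr andb.
  apply: eq_existsb => b; case: (ltnP (rho b) (rho (val i))) => Hb; rewrite ?andbF //=.
  by rewrite (agr f f' i H b (ltnW Hb)).
- move=> i f f' H; case: (val i \in Y0) => //; congr Rdiv; congr INR; apply: eq_card => b.
  rewrite !inE; case: (ltnP (rho b) (rho (val i))) => Hb; rewrite ?andbF //=.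
  by rewrite (ext_agree (f := f) (f' := f') (v := b)) // => j Ej; apply: H; rewrite Ej.
- move=> i f; rewrite exp_ln; last lra.
  case: (boolP (val i \in Y0)) => Hi /=; last first.
    rewrite (_ : [set c | false] = set0); last by apply/setP => c; rewrite inE.
    rewrite cards0 Ropp_0 exp_0 /=; lra.
  set H := INR #|Hset rho (ext f) (val i)|.
  have Hc : (INR #|[set c | inS (ext (fupd f i c) (val i)) &&
        [exists b, [&& b \in Y0, ltn (rho b) (rho (val i)) & ext (fupd f i c) b == ext (fupd f i c) (val i)]]]| <= H)%R.
    apply: le_INR; apply/leP.
    apply: leq_trans (leq_imset_card (fun b => odflt c0 (ext f b)) (Hset rho (ext f) (val i))).
    apply: subset_leq_card; apply/subsetP => c; rewrite inE ext_fupd_val /=.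
    case/andP => Hc /existsP [b /and3P [Hb Hlt /eqP Eb]].
    have Hne : b != val i by apply/eqP => Eb'; rewrite Eb' ltnn in Hlt.
    rewrite ext_fupd // in Eb.
    apply/imsetP; exists b; first by rewrite inE Hb Hlt Eb.
    by rewrite Eb.
  have Hx := one_plus_exp (H / N).
  have HNi : (0 < / N)%R by apply: Rinv_0_lt_compat.
  have Hp := exp_pos (- (H / N)).
  have E1 : (N + (2 - 1) * INR #|[set c | inS (ext (fupd f i c) (val i)) &&
        [exists b, [&& b \in Y0, ltn (rho b) (rho (val i)) & ext (fupd f i c) b == ext (fupd f i c) (val i)]]]| <= N * (1 + H / N))%R.
    have -> : (N * (1 + H / N) = N + H)%R by field; lra.
    lra.
  apply: Rle_trans (_ : _ <= N * (1 + H / N) * exp (- (H / N)))%R _.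
    by apply: Rmult_le_compat_r; [left; exact: exp_pos | exact: E1].
  rewrite Rmult_assoc; have := Rmult_le_compat_l N _ _ (Rlt_le _ _ HN) Hx; by rewrite Rmult_1_r.
- move=> f Ef.
  have -> : #|[set i : I | (val i \in Y0) && (inS (ext f (val i)) &&
        [exists b, [&& b \in Y0, ltn (rho b) (rho (val i)) & ext f b == ext f (val i)]])]|
      = #|R1set rho (ext f)|.
    rewrite (card_sub Y (fun a => (a \in Y0) && (inS (ext f a) &&
        [exists b, [&& b \in Y0, (rho b < rho a)%N & ext f b == ext f a]])));
    apply: eq_card => a; rewrite !inE.
    case: (boolP (a \in Y0)) => Ha; rewrite ?andbF //= ?(subsetP Y0Y a Ha) //.
  have := HE f Ef.
  move=> H1; apply: Rle_trans H1 _; apply: Rplus_le_compat_l; apply: Ropp_le_contravar.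
  apply: Rle_trans (_ : _ <= \big[Rplus/R0]_(i : I) (INR #|Aset (ext f)| / N * (if val i \in Y0 then R1 else R0)))%R _.
    apply: Rsum_le => i _; case: (val i \in Y0); last lra.
    rewrite Rmult_1_r; apply: Rmult_le_compat_r; first by left; apply: Rinv_0_lt_compat.
    apply: le_INR; apply/leP; apply: subset_leq_card; apply/subsetP => b; rewrite !inE.
    by case/andP => -> /andP [].
  rewrite Rsum_indc card_Y0 /Rdiv; lra.
Qed.


Lemma sum_sub0 (F : T -> R) :
  \big[Rplus/R0]_(i : I) (if val i \in Y0 then F (val i) else R0) = \big[Rplus/R0]_(a in Y0) F a.
Proof.
rewrite -(big_sub (op := Rplus) (idx := R0) Y (fun a => if a \in Y0 then F a else R0)) /=.
rewrite [RHS]big_mkcond /= big_mkcond /=; apply: eq_bigr => a _.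
case: (boolP (a \in Y0)) => H; last by case: (a \in Y).
by rewrite (subsetP Y0Y a H).
Qed.

Lemma avg_helper (p x : R) : (0 < N)%R -> (p <= x)%R ->
  ((N + (2 - 1) * p) * exp (- (x / N)) <= N)%R.
Proof.
move=> HN Hp.
have Hx := one_plus_exp (x / N).
have HE := exp_pos (- (x / N)).
have E1 : (N + (2 - 1) * p <= N * (1 + x / N))%R.
  have -> : (N * (1 + x / N) = N + x)%R by field; lra.
  lra.
apply: Rle_trans (_ : _ <= N * (1 + x / N) * exp (- (x / N)))%R _.
  by apply: Rmult_le_compat_r; [left; exact: exp_pos | exact: E1].
rewrite Rmult_assoc; have := Rmult_le_compat_l N _ _ (Rlt_le _ _ HN) Hx; by rewrite Rmult_1_r.
Qed.

Definition rO (i : I) : nat := (if val i \in Y0 then #|T| else 0) + enum_rank (val i).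
Lemma rO_inj : injective rO.
Proof.
move=> i j; rewrite /rO => E; apply: rT_inj; rewrite /rT; move: E.
have Hi := ltn_ord (enum_rank (val i)); have Hj := ltn_ord (enum_rank (val j)).
case: (val i \in Y0); case: (val j \in Y0); rewrite ?add0n => E.
- exact: (addnI E).
- by move: Hj; rewrite -E ltnNge leq_addr.
- by move: Hi; rewrite E ltnNge leq_addr.
- exact: E.
Qed.

Variable thr : R.
Definition Bad_out (chi : {ffun T -> option C}) (a : T) (col : C) : nat :=
  #|[set u | g a u && [exists b, [&& g u b, b \in Y, b \notin Y0 & chi b == Some col]]]|.
Definition BadS (chi : {ffun T -> option C}) (a : T) :=
  [set col in S | ~~ Rleb (INR (Bad_out chi a col)) thr].
Definition B2set (chi : {ffun T -> option C}) :=
  [set a in Y0 | if chi a is Some col then (col \in S) && ~~ Rleb (INR (Bad_out chi a col)) thr else false].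

Lemma Bad_out_eq (chi chi' : {ffun T -> option C}) a col : (forall b, b \in Y -> b \notin Y0 -> chi b = chi' b) ->
  Bad_out chi a col = Bad_out chi' a col.
Proof.
move=> H; apply: eq_card => u; rewrite !inE; congr andb; apply: eq_existsb => b.
case: (boolP (b \in Y)) => Hb; case: (boolP (b \in Y0)) => Hb0; rewrite ?andbF //=.
by rewrite H.
Qed.

Lemma B2_event (E : pred {ffun T -> option C}) (M : R) :
  (0 < N)%R ->
  (forall f : {ffun I -> C}, E (ext f) ->
     M <= ln 2 * INR #|B2set (ext f)| - \big[Rplus/R0]_(a in Y0) (INR #|BadS (ext f) a| / N))%R ->
  (uprob (colorings_of C Y) E <= exp (- M))%R.
Proof.
move=> HN HE; apply: (uprob_bound c0).
have agrO : forall (f f' : {ffun I -> C}) (i : I), val i \in Y0 ->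
    (forall j : I, (rO j < rO i)%N -> f j = f' j) ->
    forall b, b \in Y -> b \notin Y0 -> ext f b = ext f' b.
  move=> f f' i Hi H b Hb Hb0; apply: ext_agree => j Ej; apply: H.
  rewrite /rO Ej Hi (negbTE Hb0) /=.
  rewrite add0n; exact: leq_trans (ltn_ord _) (leq_addr _ _).
apply: (@exp_template I C rO rO_inj c0
   (fun i f => (val i \in Y0) && (if ext f (val i) is Some col then
        (col \in S) && ~~ Rleb (INR (Bad_out (ext f) (val i) col)) thr else false))
   (fun i f => if val i \in Y0 then INR #|BadS (ext f) (val i)| / N else R0)%R (ln 2)).
- move=> i f f' H; case: (boolP (val i \in Y0)) => Hi //=.
  rewrite (ext_agree (f := f) (f' := f') (v := val i)); last by move=> j /val_inj ->; apply: H.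
  case: (ext f' (val i)) => // col.
  rewrite (@Bad_out_eq (ext f) (ext f')) //; apply: (agrO f f' i Hi) => j Hj; apply: H; exact: ltnW.
- move=> i f f' H; case: (boolP (val i \in Y0)) => Hi //=.
  congr Rdiv; congr INR; apply: eq_card => col; rewrite !inE.
  by rewrite (@Bad_out_eq (ext f) (ext f')) //; apply: (agrO f f' i Hi).
- move=> i f; rewrite exp_ln; last lra.
  case: (boolP (val i \in Y0)) => Hi /=; last first.
    rewrite (_ : [set c | false] = set0); last by apply/setP => c; rewrite inE.
    rewrite cards0 Ropp_0 exp_0 /=; lra.
  apply: avg_helper => //; apply: le_INR; apply/leP; apply: subset_leq_card.
  apply/subsetP => c; rewrite !inE ext_fupd_val.
  rewrite (@Bad_out_eq (ext (fupd f i c)) (ext f)) //.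
  move=> b _ Hb0; apply: ext_fupd; apply/eqP => Eb; by rewrite Eb Hi in Hb0.
- move=> f Ef.
  have -> : #|[set i : I | (val i \in Y0) && (if ext f (val i) is Some col then
        (col \in S) && ~~ Rleb (INR (Bad_out (ext f) (val i) col)) thr else false)]|
      = #|B2set (ext f)|.
    rewrite (card_sub Y (fun a => (a \in Y0) && (if ext f a is Some col then
        (col \in S) && ~~ Rleb (INR (Bad_out (ext f) a col)) thr else false)));
    apply: eq_card => a; rewrite !inE.
    case: (boolP (a \in Y0)) => Ha; rewrite ?andbF //= ?(subsetP Y0Y a Ha) //.
  rewrite (sum_sub0 (fun a => INR #|BadS (ext f) a| / N)%R); exact: HE.
Qed.

End Concrete.

Lemma sum_ind_card (T : finType) (P : pred T) : \sum_(u : T) (if P u then 1 else 0)%N = #|[set u | P u]|.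
Proof. rewrite -big_mkcond sum1_card; apply: eq_card => u; by rewrite inE. Qed.

Lemma exists_le_sum (T : finType) (P : pred T) :
  ((if [exists u, P u] then 1 else 0) <= \sum_(u : T) (if P u then 1 else 0))%N.
Proof.
case: existsP => [[u Pu]|_] //.
by rewrite (bigD1 u) //= Pu.
Qed.

Section Counting.
Variables (T C : finType) (g : rel T) (Y Y0 : {set T}) (S : {set C}) (d : nat).
Hypothesis gsym : symmetric g.
Hypothesis degd : forall v, (deg g v <= d)%N.

Lemma deg_sum v : \sum_(u : T) (if g v u then 1 else 0)%N = deg g v.
Proof. by rewrite sum_ind_card. Qed.

Definition cw (b : T) : nat := \sum_(a in Y0) \sum_(u : T) (if g a u && g u b then 1 else 0)%N.

Lemma cw_le b : (cw b <= d * d)%N.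
Proof.
rewrite /cw.
apply: leq_trans (_ : _ <= \sum_(a : T) \sum_(u : T) (if g u a && g u b then 1 else 0))%N _.
  rewrite [X in (_ <= X)%N](bigID (fun a => a \in Y0)) /=; apply: leq_trans (leq_addr _ _).
  apply: leq_sum => a _; apply: leq_sum => u _; by rewrite (gsym a u).
rewrite exchange_big /=.
apply: leq_trans (_ : _ <= \sum_(u : T) (if g u b then d else 0))%N _.
  apply: leq_sum => u _; case: (boolP (g u b)) => H.
    apply: leq_trans (degd u); rewrite -(deg_sum u) /=; apply: leq_sum => a _; by rewrite andbT.
  by rewrite big1 // => a _; rewrite andbF.
apply: leq_trans (_ : _ <= \sum_(u : T) (if g b u then 1 else 0) * d)%N _.
  apply: leq_sum => u _; rewrite (gsym u b); by case: (g b u); rewrite ?mul1n.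
rewrite -big_distrl /= deg_sum mulnC; apply: leq_mul => //.
Qed.

Lemma cw_sum : (\sum_(b : T) cw b <= #|Y0| * d * d)%N.
Proof.
rewrite /cw exchange_big /=.
apply: leq_trans (_ : _ <= \sum_(a in Y0) (d * d))%N _; last by rewrite sum_nat_const mulnA.
apply: leq_sum => a _; rewrite exchange_big /=.
apply: leq_trans (_ : _ <= \sum_(u : T) (if g a u then d else 0))%N _.
  apply: leq_sum => u _; case: (boolP (g a u)) => H /=.
    apply: leq_trans (degd u); rewrite -(deg_sum u); apply: leq_sum => b _; by rewrite (gsym u b).
  by rewrite big1.
apply: leq_trans (_ : _ <= \sum_(u : T) (if g a u then 1 else 0) * d)%N _.
  apply: leq_sum => u _; by case: (g a u); rewrite ?mul1n.
rewrite -big_distrl /= deg_sum mulnC; apply: leq_mul => //.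
Qed.
End Counting.

Lemma sum_eq_ind (C : finType) (S : {set C}) (c : C) :
  (\sum_(col in S) (if c == col then 1 else 0) = if c \in S then 1 else 0)%N.
Proof.
case: (boolP (c \in S)) => Hc.
  rewrite (bigD1 c) //= eqxx big1 // => col /andP [_ Hne]; by rewrite eq_sym (negbTE Hne).
by rewrite big1 // => col Hcol; case: (c =P col) => // E; rewrite E Hcol in Hc.
Qed.

Section Counting2.
Variables (T C : finType) (g : rel T) (Y Y0 : {set T}) (S : {set C}) (d : nat).
Variable chi : {ffun T -> option C}.

Lemma Bad_out_sum :
  (\sum_(a in Y0) \sum_(col in S) Bad_out g Y Y0 chi a col <=
   \sum_(b : T) (if [&& b \in Y, b \notin Y0 & inS S (chi b)] then cw g Y0 b else 0))%N.
Proof.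
apply: leq_trans (_ : _ <= \sum_(a in Y0) \sum_(u : T) \sum_(b : T)
   (if [&& g a u, g u b, b \in Y, b \notin Y0 & inS S (chi b)] then 1 else 0))%N _.
  apply: leq_sum => a _.
  apply: leq_trans (_ : _ <= \sum_(col in S) \sum_(u : T) \sum_(b : T)
     (if g a u && [&& g u b, b \in Y, b \notin Y0 & chi b == Some col] then 1 else 0))%N _.
    apply: leq_sum => col _; rewrite /Bad_out -sum_ind_card; apply: leq_sum => u _.
    case: (boolP (g a u)) => Hau /=; last by [].
    exact: (exists_le_sum (fun b => [&& g u b, b \in Y, b \notin Y0 & chi b == Some col])).
  rewrite exchange_big /=; apply: leq_sum => u _.
  rewrite exchange_big /=; apply: leq_sum => b _.
  case: (boolP [&& g a u, g u b, b \in Y & b \notin Y0]) => H.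
    move: H => /and4P [H1 H2 H3 H4]; rewrite H1 H2 H3 H4 /=.
    case: (chi b) => [c|] /=.
      rewrite (eq_bigr (fun col => if c == col then 1 else 0)%N) ?sum_eq_ind //.
    by rewrite big1_eq.
  rewrite big1; first by [].
  move=> col _; case: (g a u) H => //=; case: (g u b) => //=; case: (b \in Y) => //=.
  by case: (b \in Y0).
apply: leq_trans (_ : _ <= \sum_(a in Y0) \sum_(b : T) \sum_(u : T)
   (if [&& g a u, g u b, b \in Y, b \notin Y0 & inS S (chi b)] then 1 else 0))%N _.
  by apply: eq_leq; apply: eq_bigr => a _; exact: exchange_big.
rewrite exchange_big /=; apply: leq_sum => b _; rewrite /cw.
case: (boolP [&& b \in Y, b \notin Y0 & inS S (chi b)]) => H.
  apply: leq_sum => a _; apply: leq_sum => u _.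
  by rewrite andbT.
rewrite big1 // => a _; rewrite big1 // => u _.
by rewrite !andbF.
Qed.
End Counting2.

Lemma Rdiv_le_l' (a b c : R) : (0 < b)%R -> (a <= c * b)%R -> (a / b <= c)%R.
Proof.
move=> Hb H; have Hi : (0 < / b)%R by apply: Rinv_0_lt_compat.
have : (a * / b <= c * b * / b)%R by apply: Rmult_le_compat_r; lra.
by replace (c * b * / b)%R with c by (field; lra).
Qed.

Section Concrete2.
Variables (T C : finType) (g : rel T) (Y Y0 : {set T}) (S : {set C}) (c0 : C) (d : nat).
Hypothesis Y0Y : Y0 \subset Y.
Hypothesis gsym : symmetric g.
Hypothesis degd : forall v, (deg g v <= d)%N.
Hypothesis dpos : (0 < d)%N.
Local Notation I := {x : T | x \in Y}.
Local Notation N := (INR #|C|).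
Local Notation m := #|Y0|.

Definition Wt (b : T) : R := (INR (cw g Y0 b) / (INR d * INR d))%R.
Definition Tval (chi : {ffun T -> option C}) : R :=
  \big[Rplus/R0]_(b : T) (if [&& b \in Y, b \notin Y0 & inS S (chi b)] then Wt b else R0).

Lemma dR : (0 < INR d * INR d)%R.
Proof. have H : (0 < INR d)%R by apply: lt_0_INR; apply/ltP. nra. Qed.

Lemma Wt01 b : (0 <= Wt b <= 1)%R.
Proof.
have H := dR; rewrite /Wt; split.
  apply: Rmult_le_pos; [exact: pos_INR | left; exact: Rinv_0_lt_compat].
have : (INR (cw g Y0 b) <= INR d * INR d)%R by rewrite -mult_INR; apply: le_INR; apply/leP; exact: cw_le.
move=> Hc; apply: Rdiv_le_l' => //; lra.
Qed.

Lemma sumWt : (\big[Rplus/R0]_(b : T) Wt b <= INR m)%R.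
Proof.
have H := dR.
rewrite /Wt -big_distrl /= -INR_sum.
have : (INR (\sum_b cw g Y0 b) <= INR m * (INR d * INR d))%R.
  by rewrite -!mult_INR; apply: le_INR; apply/leP; rewrite !multE mulnA; exact: cw_sum.
move=> Hc; apply: Rdiv_le_l' => //.
Qed.

Lemma T_event (E : pred {ffun T -> option C}) (M : R) :
  (0 < N)%R ->
  (forall f : {ffun I -> C}, E (ext f) ->
     M <= / 2 * Tval (ext f) - INR #|S| / N * INR m)%R ->
  (uprob (colorings_of C Y) E <= exp (- M))%R.
Proof.
move=> HN HE; apply: (uprob_bound c0).
apply: (@w_template I C (@rT T Y) (@rT_inj T Y) c0 (fun i f => inS S (ext f (val i)))
          (fun i => if val i \in Y0 then R0 else Wt (val i)) (INR #|S| / N)%R).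
- move=> i f f' H; congr inS; apply: ext_agree => j /val_inj ->; apply: H; exact: leqnn.
- move=> i; case: (val i \in Y0); [lra | exact: Wt01].
- move=> i f; rewrite (_ : [set c | _] = S); last by apply/setP => c; rewrite inE ext_fupd_val.
  right; field; lra.
- move=> f Ef; have := HE f Ef.
  have E1 : Tval (ext f) = \big[Rplus/R0]_(i : I)
      ((if val i \in Y0 then R0 else Wt (val i)) * (if inS S (ext f (val i)) then R1 else R0))%R.
    rewrite /Tval (bigID (fun b => b \in Y)) /= [X in (_ + X)%R]big1; last first.
      by move=> b /negbTE ->.
    rewrite Rplus_0_r (big_sub (op := Rplus) (idx := R0) Y) /=; apply: eq_bigr => i _.
    rewrite (valP i) /=.
    case: (val i \in Y0) => /=; first by ring.
    case: (inS S (ext f (val i))); ring.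
  have E2 : (\big[Rplus/R0]_(i : I) (if val i \in Y0 then R0 else Wt (val i)) <= INR m)%R.
    apply: Rle_trans sumWt.
    rewrite -(big_sub (op := Rplus) (idx := R0) Y (fun b => if b \in Y0 then R0 else Wt b)).
    rewrite big_mkcond /=; apply: Rsum_le => b _.
    have := Wt01 b; case: (b \in Y); case: (b \in Y0); lra.
  have Hq : (0 <= INR #|S| / N)%R.
    apply: Rmult_le_pos; [exact: pos_INR | left; exact: Rinv_0_lt_compat].
  rewrite -E1 => H1.
  apply: Rle_trans H1 _; apply: Rplus_le_compat_l; apply: Ropp_le_contravar.
  by apply: Rmult_le_compat_l.
Qed.

Variable thr : R.
Hypothesis thr_pos : (0 < thr)%R.

Lemma BadS_sum (chi : {ffun T -> option C}) :
  (\big[Rplus/R0]_(a in Y0) (INR #|BadS g Y Y0 S thr chi a| * thr)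
     <= INR d * INR d * Tval chi)%R.
Proof.
apply: Rle_trans (_ : _ <= \big[Rplus/R0]_(a in Y0) \big[Rplus/R0]_(col in S) INR (Bad_out g Y Y0 chi a col))%R _.
  apply: Rsum_le => a _.
  rewrite (bigID (fun col => col \in BadS g Y Y0 S thr chi a)) /=.
  apply: Rle_trans (_ : _ <= \big[Rplus/R0]_(col in S | col \in BadS g Y Y0 S thr chi a) INR (Bad_out g Y Y0 chi a col) + 0)%R _; last first.
    apply: Rplus_le_compat_l; apply: Rsum_ge0 => *; exact: pos_INR.
  rewrite Rplus_0_r.
  apply: Rle_trans (_ : _ <= \big[Rplus/R0]_(col in S | col \in BadS g Y Y0 S thr chi a) thr)%R _.
    rewrite Rsum_card; right; congr (INR _ * _)%R; apply: eq_card => col.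
    have -> : (col \in (fun i : C => (i \in S) && (i \in BadS g Y Y0 S thr chi a))) = (col \in S) && (col \in BadS g Y Y0 S thr chi a) by []. rewrite !inE; by case: (col \in S).
  apply: Rsum_le => col /andP [_]; rewrite inE => /andP [_].
  rewrite /Rleb; case: Rle_dec => //= H _; lra.
rewrite (eq_bigr (fun a => INR (\sum_(col in S) Bad_out g Y Y0 chi a col))); last by move=> a _; rewrite INR_sum.
rewrite -INR_sum.
apply: Rle_trans (_ : _ <= INR (\sum_(b : T) (if [&& b \in Y, b \notin Y0 & inS S (chi b)] then cw g Y0 b else 0)))%R _.
  apply: le_INR; apply/leP; exact: Bad_out_sum.
rewrite INR_sum /Tval big_distrr /=; apply: Rsum_le => b _.
case: (_ && _); last by right; simpl; ring.
rewrite /Wt; right; field; apply: Rgt_not_eq; apply: lt_0_INR; by apply/ltP.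
Qed.
End Concrete2.

Lemma e_ge : (5 / 2 <= exp 1)%R.
Proof.
have H := exp_ineq1_le (1 / 8).
have E : exp 1 = (exp (1 / 8) ^ 8)%R.
  rewrite -(exp_ln (exp (1/8) ^ 8)); last by apply: pow_lt; apply: exp_pos.
  rewrite ln_pow; last exact: exp_pos.
  rewrite ln_exp; congr exp; simpl; field.
rewrite E.
have H0 : (0 <= 1 + 1 / 8)%R by lra.
apply: Rle_trans (_ : _ <= (1 + 1 / 8) ^ 8)%R _.
  simpl; lra.
apply: pow_incr; lra.
Qed.

Lemma exp_m1_le : (exp (-1) <= 2 / 5)%R.
Proof.
have H := e_ge; have E : (exp 1 * exp (-1) = 1)%R by rewrite -exp_plus Rplus_opp_r exp_0.
have := exp_pos (-1); nra.
Qed.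

Lemma ln2_ge : (1 / 2 <= ln 2)%R.
Proof. have := ln_lt_2; lra. Qed.

Lemma six_le : (6 <= exp 2)%R.
Proof.
have E : exp 2 = (exp 1 * exp 1)%R by rewrite -exp_plus; congr exp; ring.
have := e_ge; nra.
Qed.

Lemma Rleb_true a b : Rleb a b -> (a <= b)%R.
Proof. by rewrite /Rleb; case: Rle_dec. Qed.
Lemma Rleb_false a b : ~~ Rleb a b -> (b < a)%R.
Proof. rewrite /Rleb; case: Rle_dec => //= H _; lra. Qed.
Lemma Rleb_intro a b : (a <= b)%R -> Rleb a b.
Proof. by rewrite /Rleb; case: Rle_dec. Qed.

Lemma uprob_mono (S : finType) (Om : {set S}) (P1 P2 : pred S) :
  (forall s, s \in Om -> P1 s -> P2 s) -> (uprob Om P1 <= uprob Om P2)%R.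
Proof.
move=> H; rewrite /uprob /Rdiv; apply: Rmult_le_compat_r.
  case: (posnP #|Om|) => [->|Hp]; first by rewrite /= Rinv_0; lra.
  left; apply: Rinv_0_lt_compat; apply: lt_0_INR; exact/ltP.
apply: le_INR; apply/leP; apply: subset_leq_card; apply/subsetP => s; rewrite !inE.
case/andP => Hs Hp; by rewrite Hs (H s Hs Hp).
Qed.

Lemma uprob_union (S : finType) (Om : {set S}) (P1 P2 : pred S) :
  (uprob Om (fun s => P1 s || P2 s) <= uprob Om P1 + uprob Om P2)%R.
Proof.
rewrite /uprob /Rdiv -Rmult_plus_distr_r; apply: Rmult_le_compat_r.
  case: (posnP #|Om|) => [->|Hp]; first by rewrite /= Rinv_0; lra.
  left; apply: Rinv_0_lt_compat; apply: lt_0_INR; exact/ltP.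
rewrite -plus_INR; apply: le_INR; apply/leP.
apply: leq_trans (leq_card_setU _ _); apply: subset_leq_card; apply/subsetP => s; rewrite !inE.
by case/andP => -> /orP [] ->; rewrite ?orbT.
Qed.

Definition rhoA (T : finType) (v : T) : nat := enum_rank v.
Definition rhoB (T : finType) (v : T) : nat := #|T| - enum_rank v.
Lemma rhoA_inj (T : finType) : injective (@rhoA T).
Proof. move=> u v E; apply: enum_rank_inj; exact: ord_inj. Qed.
Lemma rhoB_inj (T : finType) : injective (@rhoB T).
Proof.
move=> u v; rewrite /rhoB => E; apply: rhoA_inj; rewrite /rhoA.
have Hu := ltn_ord (enum_rank u); have Hv := ltn_ord (enum_rank v).
have := congr1 (fun k => #|T| - k) E; rewrite !subKn //; exact: ltnW.
Qed.

Lemma inclusion (T C : finType) (g : rel T) (eG : rel C) (Y : {set T}) (x : T) (c : C)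
  (alpha : R) (d : nat) (chi : {ffun T -> option C}) :
  nbhd g x \subset Y -> chi \in colorings_of C Y ->
  (#|Aset (nbhd g x) (nbhd eG c) chi| <=
     W eG g alpha d chi x c + #|R1set (nbhd g x) (nbhd eG c) (@rhoA T) chi|
     + #|R1set (nbhd g x) (nbhd eG c) (@rhoB T) chi|
     + #|B2set g Y (nbhd g x) (nbhd eG c) (INR d / sqrt alpha) chi|)%N.
Proof.
move=> Y0Y Hchi.
set Y0 := nbhd g x; set S := nbhd eG c; set thr := (INR d / sqrt alpha)%R.
set Wset := [set y in nbhd g x | match chi y with
      | Some col =>
          [&& [forall y', (y' \in nbhd g x) ==> (chi y' == Some col) ==> (y' == y)],
              Rleb (INR (Bad g chi y)) (INR d / sqrt alpha) &
              eG c col]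
      | None => false
      end].
have HW : W eG g alpha d chi x c = #|Wset| by [].
rewrite HW.
have Hcol : forall v, (chi v != None) = (v \in Y).
  move=> v; move: Hchi; rewrite inE => /forallP /(_ v) /eqP; done.
apply: leq_trans (_ : _ <= #|Wset :|: R1set Y0 S (@rhoA T) chi :|: R1set Y0 S (@rhoB T) chi
                            :|: B2set g Y Y0 S thr chi|)%N _; last first.
  apply: leq_trans (leq_card_setU _ _) _; rewrite leq_add2r.
  apply: leq_trans (leq_card_setU _ _) _; rewrite leq_add2r.
  exact: leq_card_setU.
apply: subset_leq_card; apply/subsetP => a; rewrite inE => /andP [Ha].
case Hc: (chi a) => [col|] // HcolS0.
have HcolS : col \in S := HcolS0.
case: (boolP (a \in R1set Y0 S (@rhoA T) chi)) => H1; first by rewrite !in_setU H1 !orbT.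
case: (boolP (a \in R1set Y0 S (@rhoB T) chi)) => H2; first by rewrite !in_setU H2 !orbT.
case: (boolP (a \in B2set g Y Y0 S thr chi)) => H3; first by rewrite !in_setU H3 !orbT.
suff : a \in Wset by move=> H; rewrite !in_setU H.
have uniq : forall y', y' \in Y0 -> chi y' = Some col -> y' = a.
  move=> y' Hy' Ey'; apply/eqP; apply/negPn/negP => Hne.
  case: (ltngtP (rhoA y') (rhoA a)) => Hlt.
  - move/negP: H1; apply; rewrite inE Ha Hc /= HcolS /=.
    by apply/existsP; exists y'; rewrite Hy' Hlt Ey' eqxx.
  - move/negP: H2; apply; rewrite inE Ha Hc /= HcolS /=.
    apply/existsP; exists y'; rewrite Hy' Ey' eqxx andbT /=.
    rewrite /rhoB; apply: ltn_sub2l => //; exact: ltn_ord.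
  - by move: Hne; rewrite (rhoA_inj Hlt) eqxx.
rewrite inE Ha Hc /=.
apply/and3P; split.
- apply/forallP => y'; apply/implyP => Hy'; apply/implyP => /eqP Ey'.
  by rewrite (uniq y' Hy' Ey').
- apply: Rleb_intro.
  have HB : Rleb (INR (Bad_out g Y Y0 chi a col)) thr.
    by move: H3; rewrite inE Ha Hc HcolS /= negbK.
  apply: Rle_trans (Rleb_true HB).
  apply: le_INR; apply/leP; apply: subset_leq_card; apply/subsetP => u; rewrite !inE.
  case/andP => Hau /existsP [v' /and4P [Hv'u Hne Hnone /eqP Ev']].
  rewrite Hau /=; apply/existsP; exists v'.
  have Hv'Y : v' \in Y by rewrite -Hcol.
  rewrite inE in Hv'u; rewrite Hv'u Hv'Y /= Ev' Hc eqxx andbT.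
  apply/negP => Hv'0; move/negP: Hne; apply; apply/eqP; apply: uniq => //.
  by rewrite Ev'.
- by move: HcolS; rewrite inE.
Qed.

Lemma bigmin_le (I : eqType) (r : seq I) (n : nat) (F : I -> nat) (c : I) :
  c \in r -> (\big[minn/n]_(v <- r) F v <= F c)%N.
Proof.
elim: r => [|a r IH] //; rewrite inE big_cons => /orP [/eqP ->|H].
  exact: geq_minl.
apply: leq_trans (geq_minr _ _) (IH H).
Qed.

Lemma mindeg_le (C : finType) (eG : rel C) (c : C) : (mindeg eG <= deg eG c)%N.
Proof. rewrite /mindeg; apply: bigmin_le; exact: mem_index_enum. Qed.

Lemma exists_d0 (r : R) : exists d0 : nat, (r < INR d0)%R.
Proof. have [n Hn] := INR_unbounded r; exists n; lra. Qed.

Lemma exp_mono_neg a b : (a <= b)%R -> (exp (- b) <= exp (- a))%R.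
Proof. move=> H; apply: exp_le; lra. Qed.

Lemma INR_muln a b : INR (a * b)%N = (INR a * INR b)%R.
Proof. exact: mult_INR. Qed.

Unset Implicit Arguments.

Theorem lemma8 :
  forall eps beta : R, (0 < eps)%R -> (0 < beta)%R ->
  exists alpha0 : R, forall alpha : R, (alpha0 <= alpha)%R ->
  exists K : R, (0 < K)%R /\
  exists d0 : nat, forall d : nat, (d0 <= d)%N ->
  forall (C : finType) (eG : rel C), simple_graph eG ->
  INR #|C| = (alpha * INR d)%R ->
  (INR (maxdeg eG) <= beta * INR (mindeg eG))%R ->
  (Rpower (INR d) eps < INR (mindeg eG))%R ->
  forall (T : finType) (g : rel T) (X Y : {set T}),
  simple_graph g -> bipartition g X Y ->
  (forall v : T, (deg g v <= d)%N) ->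
  forall x : T, x \in X -> (d <= 2 * deg g x)%N ->
  forall c : C,
  (uprob (colorings_of C Y)
     (fun chi => Rleb (INR (W eG g alpha d chi x c))
                      (INR (mindeg eG) / (alpha * INR d) * INR (deg g x) / 2))
   <= exp (- (K * INR (mindeg eG))))%R.
Proof.
move=> eps beta Heps Hbeta.
exists 1000000%R => alpha Halpha.
have Hapos : (0 < alpha)%R by lra.
exists (/ (2000 * alpha))%R; split; first by apply: Rinv_0_lt_compat; lra.
have [d0 Hd0] := exists_d0 (Rpower (4000 * alpha) (/ eps)).
exists d0 => d Hd C eG HeG HC Hmax Hmin T g X Y Hg Hbip Hdeg x Hx Hdx c.
have Hr0 : (0 < Rpower (4000 * alpha) (/ eps))%R by rewrite /Rpower; apply: exp_pos.
have HdR : (Rpower (4000 * alpha) (/ eps) < INR d)%R.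
  apply: Rlt_le_trans Hd0 _; apply: le_INR; exact/leP.
have Hdpos : (0 < INR d)%R by lra.
have dpos : (0 < d)%N by rewrite lt0n; apply/eqP => E; move: Hdpos; rewrite E /=; lra.
have Hdelta : (4000 * alpha <= INR (mindeg eG))%R.
  apply: Rle_trans (Rlt_le _ _ Hmin).
  have -> : (4000 * alpha = Rpower (Rpower (4000 * alpha) (/ eps)) eps)%R.
    rewrite Rpower_mult Rinv_l; [by rewrite Rpower_1; lra | lra].
  apply: Rle_Rpower_l; lra.
set delta := INR (mindeg eG) in Hdelta *.
set Y0 := nbhd g x.
set S := nbhd eG c.
have Y0Y : Y0 \subset Y.
  apply/subsetP => u; rewrite inE => Hxu.
  case: Hbip => _ [HXY [HX _]].
  have : u \in X :|: Y by rewrite HXY inE.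
  rewrite inE => /orP [HuX|] //.
  by move: (HX x u Hx HuX); rewrite Hxu.
have gsym : symmetric g by case: Hg.
have HNpos : (0 < INR #|C|)%R by rewrite HC; apply: Rmult_lt_0_compat; lra.
have Hs : (delta <= INR #|S|)%R by apply: le_INR; apply/leP; exact: mindeg_le.
have Hdel0 : (0 <= delta)%R by apply: pos_INR.
set m := #|Y0|.
have Hmdeg : deg g x = m by [].
have Hm1 : (INR d <= 2 * INR m)%R.
  have := le_INR _ _ (leP Hdx); by rewrite INR_muln Hmdeg.
have Hm2 : (INR m <= INR d)%R by apply: le_INR; apply/leP; rewrite -Hmdeg; exact: Hdeg.
set Q := (INR #|S| * INR m / INR #|C|)%R.
have HQ : (delta / (2 * alpha) <= Q)%R.
  have E1 : (delta / (2 * alpha) = (delta * INR d / 2) / (alpha * INR d))%R by field; lra.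
  rewrite E1 /Q HC /Rdiv; apply: Rmult_le_compat_r.
    left; apply: Rinv_0_lt_compat; nra.
  nra.
have HQ0 : (0 <= Q)%R.
  apply: Rle_trans HQ; apply: Rmult_le_pos => //; left; apply: Rinv_0_lt_compat; lra.
have Hqm : (INR #|S| / INR #|C| * INR m = Q)%R by rewrite /Q; field; lra.
have Hr : (INR m / INR #|C| <= / 1000000)%R.
  rewrite HC; apply: Rle_trans (_ : _ <= / alpha)%R _.
    apply: Rdiv_le_l' => //; first nra.
    have -> : (/ alpha * (alpha * INR d) = INR d)%R by field; lra.
    done.
  apply: Rinv_le_contravar => //; lra.
have Hr0' : (0 <= INR m / INR #|C|)%R.
  apply: Rmult_le_pos; [exact: pos_INR | left; apply: Rinv_0_lt_compat; lra].
have HL : (INR (mindeg eG) / (alpha * INR d) * INR (deg g x) / 2 <= Q / 2)%R.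
  rewrite -HC Hmdeg /Q /Rdiv.
  have Hi : (0 < / INR #|C|)%R by apply: Rinv_0_lt_compat.
  have H1 : (delta * INR m <= INR #|S| * INR m)%R by apply: Rmult_le_compat_r; [exact: pos_INR | lra].
  have H2 : (0 <= / INR #|C| * / 2)%R by apply: Rmult_le_pos; lra.
  have := Rmult_le_compat_r _ _ _ H2 H1.
  have -> : (delta * / INR #|C| * INR m * / 2 = delta * INR m * (/ INR #|C| * / 2))%R by ring.
  have -> : (INR #|S| * INR m * / INR #|C| * / 2 = INR #|S| * INR m * (/ INR #|C| * / 2))%R by ring.
  done.
have Hsa : (1000 <= sqrt alpha)%R.
  rewrite -(sqrt_square 1000); last lra.
  apply: sqrt_le_1_alt; lra.
have Hsa0 : (0 < sqrt alpha)%R by lra.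
have Ea : alpha = (sqrt alpha * sqrt alpha)%R by rewrite sqrt_sqrt; lra.
set thr := (INR d / sqrt alpha)%R.
have Hln := ln2_ge.
have He1 := exp_m1_le.
pose A (chi : {ffun T -> option C}) := INR #|Aset Y0 S chi|.
pose E1p (chi : {ffun T -> option C}) := Rleb (A chi) (11 / 20 * Q).
pose E2p (chi : {ffun T -> option C}) := ~~ Rleb (A chi) (3 * Q).
pose E3p (chi : {ffun T -> option C}) := Rleb (A chi) (3 * Q) && Rleb (Q / 100) (INR #|R1set Y0 S (@rhoA T) chi|).
pose E4p (chi : {ffun T -> option C}) := Rleb (A chi) (3 * Q) && Rleb (Q / 100) (INR #|R1set Y0 S (@rhoB T) chi|).
pose E5p (chi : {ffun T -> option C}) := ~~ Rleb (Tval g Y Y0 S d chi) (4 * Q).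
pose E6p (chi : {ffun T -> option C}) := Rleb (Tval g Y Y0 S d chi) (4 * Q) && Rleb (Q / 50) (INR #|B2set g Y Y0 S thr chi|).
have Hincl : (uprob (colorings_of C Y)
     (fun chi => Rleb (INR (W eG g alpha d chi x c))
                      (INR (mindeg eG) / (alpha * INR d) * INR (deg g x) / 2))
   <= uprob (colorings_of C Y) (fun chi => E1p chi || (E2p chi || (E3p chi || (E4p chi || (E5p chi || E6p chi))))))%R.
  apply: uprob_mono => chi Hchi HW.
  have HW' := Rleb_true HW.
  have Hi := @inclusion T C g eG Y x c alpha d chi Y0Y Hchi.
  have Hi' := le_INR _ _ (leP Hi); rewrite !plus_INR in Hi'.
  apply/negPn/negP => Hn0.
  have Hn : ~~ (E1p chi || (E2p chi || (E3p chi || (E4p chi || (E5p chi || E6p chi))))) := Hn0.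
  have H1 : ~~ E1p chi by apply: contra Hn => H; rewrite H.
  have H2 : ~~ E2p chi by apply: contra Hn => H; rewrite H orbT.
  have H3 : ~~ E3p chi by apply: contra Hn => H; rewrite H !orbT.
  have H4 : ~~ E4p chi by apply: contra Hn => H; rewrite H !orbT.
  have H5 : ~~ E5p chi by apply: contra Hn => H; rewrite H !orbT.
  have H6 : ~~ E6p chi by apply: contra Hn => H; rewrite H !orbT.
  have HA1 := Rleb_false H1.
  have HA2 : (A chi <= 3 * Q)%R by apply: Rleb_true; move: H2; rewrite negbK.
  have H3' : ~~ Rleb (Q / 100) (INR #|R1set Y0 S (@rhoA T) chi|).
    by move: H3; rewrite /E3p (Rleb_intro HA2).
  have H4' : ~~ Rleb (Q / 100) (INR #|R1set Y0 S (@rhoB T) chi|).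
    by move: H4; rewrite /E4p (Rleb_intro HA2).
  have HT : Rleb (Tval g Y Y0 S d chi) (4 * Q) by move: H5; rewrite negbK.
  have H6' : ~~ Rleb (Q / 50) (INR #|B2set g Y Y0 S thr chi|).
    by move: H6; rewrite /E6p HT.
  have := Rleb_false H3'; have := Rleb_false H4'; have := Rleb_false H6'.
  rewrite /A in HA1 HA2; rewrite -/Y0 -/S -/thr in Hi'.
  lra.
apply: Rle_trans Hincl _.
have Hb : forall P : pred {ffun T -> option C}, (uprob (colorings_of C Y) P <= exp (- (Q / 500)))%R ->
    (uprob (colorings_of C Y) P <= exp (- (Q / 500)))%R by [].
have B1 : (uprob (colorings_of C Y) E1p <= exp (- (Q / 500)))%R.
  set k := (- (INR #|S| / INR #|C| * (1 - exp (-1))))%R.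
  apply: Rle_trans (@const_event T C Y Y0 S c Y0Y (-1) k E1p (Q / 20) _ _) _.
  - have H := one_plus_exp k.
    have -> : (INR #|C| + (exp (-1) - 1) * INR #|S| = INR #|C| * (1 + k))%R by rewrite /k; field; lra.
    rewrite Rmult_assoc; have := Rmult_le_compat_l _ _ _ (Rlt_le _ _ HNpos) H; by rewrite Rmult_1_r.
  - move=> f Hf; have := Rleb_true Hf; rewrite /A.
    have -> : (k * INR m = - (Q * (1 - exp (-1))))%R by rewrite /k -Hqm; ring.
    nra.
  - apply: exp_mono_neg; lra.
have B2 : (uprob (colorings_of C Y) E2p <= exp (- (Q / 500)))%R.
  apply: Rle_trans (@const_event T C Y Y0 S c Y0Y (ln 2) (INR #|S| / INR #|C|) E2p (Q / 2) _ _) _.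
  - rewrite exp_ln; last lra.
    have H := one_plus_exp (INR #|S| / INR #|C|).
    have -> : (INR #|C| + (2 - 1) * INR #|S| = INR #|C| * (1 + INR #|S| / INR #|C|))%R by field; lra.
    rewrite Rmult_assoc; have := Rmult_le_compat_l _ _ _ (Rlt_le _ _ HNpos) H; by rewrite Rmult_1_r.
  - move=> f Hf; have := Rleb_false Hf; rewrite /A Hqm.
    have := pos_INR #|Aset Y0 S (ext f)|. nra.
  - apply: exp_mono_neg; lra.
have B3 : forall rho (rinj : injective rho),
    (uprob (colorings_of C Y) (fun chi => Rleb (A chi) (3 * Q) && Rleb (Q / 100) (INR #|R1set Y0 S rho chi|))
       <= exp (- (Q / 500)))%R.
  move=> rho rinj.
  apply: Rle_trans (@R1_event T C Y Y0 S c Y0Y rho rinj _ (Q / 500) HNpos _) _; last lra.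
  move=> f /andP [Hf1 Hf2]; have := Rleb_true Hf1; have := Rleb_true Hf2; rewrite /A.
  have -> : (INR m * INR #|Aset Y0 S (ext f)| / INR #|C| = INR m / INR #|C| * INR #|Aset Y0 S (ext f)|)%R.
    by rewrite /Rdiv; ring.
  have := pos_INR #|Aset Y0 S (ext f)|. nra.
have B5 : (uprob (colorings_of C Y) E5p <= exp (- (Q / 500)))%R.
  apply: Rle_trans (@T_event T C g Y Y0 S c d gsym Hdeg dpos E5p Q HNpos _) _.
  - move=> f Hf; have := Rleb_false Hf; rewrite Hqm; lra.
  - apply: exp_mono_neg; lra.
have B6 : (uprob (colorings_of C Y) E6p <= exp (- (Q / 500)))%R.
  apply: Rle_trans (@B2_event T C g Y Y0 S c Y0Y thr E6p (Q / 500) HNpos _) _; last lra.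
  move=> f /andP [Hf1 Hf2]; have HT := Rleb_true Hf1; have HB := Rleb_true Hf2.
  have Hsum := @BadS_sum T C g Y Y0 S d dpos thr (ext f).
  set Sg := \big[Rplus/R0]_(a in Y0) (INR #|BadS g Y Y0 S thr (ext f) a| / INR #|C|)%R.
  have ESg : (Sg * (INR d * INR d * sqrt alpha) =
      \big[Rplus/R0]_(a in Y0) (INR #|BadS g Y Y0 S thr (ext f) a| * thr))%R.
    rewrite /Sg big_distrl /=; apply: eq_bigr => a _.
    rewrite /thr HC {2}Ea; field; lra.
  have Hdd : (0 < INR d * INR d)%R by nra.
  have HSg : (Sg * sqrt alpha <= 4 * Q)%R.
    have : (INR d * INR d * (Sg * sqrt alpha) <= INR d * INR d * (4 * Q))%R.
      have -> : (INR d * INR d * (Sg * sqrt alpha) = Sg * (INR d * INR d * sqrt alpha))%R by ring.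
      rewrite ESg; apply: Rle_trans Hsum _; apply: Rmult_le_compat_l; lra.
    move=> H; apply: (Rmult_le_reg_l (INR d * INR d)) => //.
  have HSg0 : (0 <= Sg)%R.
    apply: Rsum_ge0 => a _; apply: Rmult_le_pos; [exact: pos_INR | left; apply: Rinv_0_lt_compat; lra].
  have HSg2 : (Sg <= 4 * Q / 1000)%R.
    have : (Sg * 1000 <= Sg * sqrt alpha)%R by apply: Rmult_le_compat_l.
    lra.
  have := pos_INR #|B2set g Y Y0 S thr (ext f)|.
  nra.
have B3a : (uprob (colorings_of C Y) E3p <= exp (- (Q / 500)))%R := B3 _ (@rhoA_inj T).
have B3b : (uprob (colorings_of C Y) E4p <= exp (- (Q / 500)))%R := B3 _ (@rhoB_inj T).
have U : (uprob (colorings_of C Y) (fun chi => E1p chi || (E2p chi || (E3p chi || (E4p chi || (E5p chi || E6p chi)))))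
          <= 6 * exp (- (Q / 500)))%R.
  apply: Rle_trans (uprob_union (colorings_of C Y) E1p
     (fun chi => E2p chi || (E3p chi || (E4p chi || (E5p chi || E6p chi))))) _.
  have := uprob_union (colorings_of C Y) E2p (fun chi => E3p chi || (E4p chi || (E5p chi || E6p chi))).
  have := uprob_union (colorings_of C Y) E3p (fun chi => E4p chi || (E5p chi || E6p chi)).
  have := uprob_union (colorings_of C Y) E4p (fun chi => E5p chi || E6p chi).
  have := uprob_union (colorings_of C Y) E5p E6p.
  lra.
apply: Rle_trans U _.
set t := (/ (2000 * alpha) * delta)%R.
have Ht : (2 <= t)%R.
  have -> : (2 = / (2000 * alpha) * (4000 * alpha))%R by field; lra.
  apply: Rmult_le_compat_l => //; left; apply: Rinv_0_lt_compat; lra.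
have Hq2 : (2 * t <= Q / 500)%R.
  have -> : (2 * t = delta / (2 * alpha) / 500)%R by rewrite /t; field; lra.
  lra.
have E1 := exp_mono_neg Hq2.
have Ee : exp (- (2 * t)) = (exp (- t) * exp (- t))%R by rewrite -exp_plus; congr exp; ring.
have Ht6 : (6 <= exp t)%R by apply: Rle_trans six_le (exp_le Ht).
have Eone : (exp t * exp (- t) = 1)%R by rewrite -exp_plus Rplus_opp_r exp_0.
have Hp := exp_pos (- t).
rewrite Ee in E1.
nra.
Qed.
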